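(* Let $(X,\tau)$ be a topological quandle and let $\{X_\alpha\}_{\alpha\in\Gamma}$ be its path components. Then each $X_\alpha$, with the subspace topology and the restricted operation, is a topological subquandle of $X$; in particular $x\triangleright y\in X_\alpha$ for all $x,y\in X_\alpha$.
   Context: A quandle is a set with a binary operation $\triangleright$ such that $x\triangleright x=x$, each $\beta_y(x)=x\triangleright y$ is bijective, and $(x\triangleright y)\triangleright z=(x\triangleright z)\triangleright(y\triangleright z)$. A topological quandle is a topological space with a continuous quandle operation $\triangleright:X\times X\to X$ such that every $\beta_y$ is a homeomorphism. A topological subquandle is a subset closed under $\triangleright$ which is a topological quandle with the subspace topology and the restricted operation. *)

(* Defs.v *)
From HB Require Import structures.
From mathcomp Require Import all_boot all_order all_algebra.
From mathcomp Require Import all_classical all_reals all_analysis.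
From mathcomp Require Import Rstruct Rstruct_topology.
Set Implicit Arguments. Unset Strict Implicit. Unset Printing Implicit Defensive.
Import Order.TTheory GRing.Theory Num.Theory.
Local Open Scope classical_set_scope.
Local Open Scope ring_scope.

(* Quandle axioms for a binary operation [op] (op x y = x ▷ y). *)
Definition is_quandle (X : Type) (op : X -> X -> X) : Prop :=
  [/\ forall x, op x x = x,
      forall y, bijective (fun x => op x y) &
      forall x y z, op (op x y) z = op (op x z) (op y z)].

Definition is_homeomorphism (X : topologicalType) (f : X -> X) : Prop :=
  exists g : X -> X, [/\ cancel f g, cancel g f, continuous f & continuous g].

Definition topological_quandle (X : topologicalType) (op : X -> X -> X) : Prop :=
  [/\ is_quandle op,
      continuous (fun p : X * X => op p.1 p.2) &
      forall y, is_homeomorphism (fun x => op x y)].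

(* Topological subquandle: A closed under op, and A with the subspace topology
   (the initial topology on the sigma type [set_type A]) and the restricted
   operation is a topological quandle. *)
Definition topological_subquandle (X : topologicalType) (op : X -> X -> X)
    (A : set X) : Prop :=
  (forall x y, A x -> A y -> A (op x y)) /\
  exists opA : set_type A -> set_type A -> set_type A,
    (forall a b, set_val (opA a b) = op (set_val a) (set_val b)) /\
    topological_quandle opA.

Definition path_connected_pts (X : topologicalType) (x y : X) : Prop :=
  exists f : Rdefinitions.R -> X,
    [/\ {within `[0%R, 1%R], continuous f}, f 0%R = x & f 1%R = y].

Definition path_component (X : topologicalType) (x : X) : set X :=
  [set y | path_connected_pts x y].

(* Main.v *)
Require Import Defs.
From HB Require Import structures.
From mathcomp Require Import all_boot all_order all_algebra.
From mathcomp Require Import all_classical all_reals all_analysis.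
From mathcomp Require Import Rstruct Rstruct_topology.
Set Implicit Arguments. Unset Strict Implicit. Unset Printing Implicit Defensive.
Import Order.TTheory GRing.Theory Num.Theory.
Local Open Scope classical_set_scope.
Local Open Scope ring_scope.
Notation RR := Rdefinitions.R.

Lemma within_comp_setT (S U : topologicalType) (T : topologicalType) (B : set T)
  (m : S -> T) (p : T -> U) :
  continuous m -> (forall s, B (m s)) -> {within B, continuous p} ->
  continuous (p \o m).
Proof.
move=> cm hB /subspace_sigL_continuousP cp.
pose m' : S -> set_type B := fun s => exist _ (m s) (mem_set (hB s)).
have cm' : continuous m'.
  apply: (@continuous_comp_initial _ _ _ (@set_val T B)).
  by [].
have -> : p \o m = sigL B p \o m' by [].
move=> x; apply: continuous_comp; [exact: cm'| exact: cp].
Qed.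

Definition clamp (t : RR) : RR := Num.max 0 (Num.min t 1).

Lemma clamp_cont : continuous clamp.
Proof.
move=> x.
have -> : clamp = ((fun=> 0) \max (id \min (fun=> 1)) : RR -> RR^o) by [].
apply: continuous_max; first exact: cst_continuous.
by apply: continuous_min => //; exact: cst_continuous.
Qed.

Lemma clamp_in t : (`[0, 1]%classic : set RR) (clamp t).
Proof.
rewrite /clamp /= in_itv /=; apply/andP; split; first by rewrite le_max lexx.
by rewrite ge_max ler01 ge_min lexx orbT.
Qed.

Lemma cont_1m : continuous (fun t : RR => 1 - t).
Proof.
move=> x. apply: (@continuousB _ RR^o _ (cst 1) id x); [exact: cst_continuous|by []].
Qed.
Lemma cont_2t : continuous (fun t : RR => 2 * t).
Proof.
move=> x; change {for x, continuous ((cst (2:RR)) \* id)}; apply: continuousM; [exact: cst_continuous|by []].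
Qed.
Lemma cont_2tm1 : continuous (fun t : RR => 2 * t - 1).
Proof.
move=> x. apply: (@continuousB _ RR^o _ (fun t : RR => 2 * t) (cst 1) x); last exact: cst_continuous.
exact: cont_2t.
Qed.

Definition conn (X : topologicalType) (a b : X) :=
  exists E : RR -> X, [/\ continuous E, E 0 = a & E 1 = b].

Lemma clamp0 : clamp 0 = 0.
Proof. by rewrite /clamp (min_l ler01) maxxx. Qed.
Lemma clamp1 : clamp 1 = 1.
Proof. by rewrite /clamp minxx max_r ?ler01. Qed.

Lemma pc_conn (X : topologicalType) (a b : X) :
  path_connected_pts a b <-> conn a b.
Proof.
split.
  move=> [f [cf f0 f1]]; exists (f \o clamp); split.
  - apply: within_comp_setT cf; [exact: clamp_cont| exact: clamp_in].
  - by rewrite /= clamp0.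
  - by rewrite /= clamp1.
move=> [E [cE E0 E1]]; exists E; split => //.
exact: continuous_subspaceT.
Qed.

Lemma conn_refl (X : topologicalType) (a : X) : conn a a.
Proof. by exists (fun=> a); split => //; exact: cst_continuous. Qed.

Lemma conn_sym (X : topologicalType) (a b : X) : conn a b -> conn b a.
Proof.
move=> [E [cE E0 E1]]; exists (E \o (fun t => 1 - t)); split.
- move=> x; apply: (@continuous_comp _ _ _ (fun t : RR => 1 - t) E); last exact: cE.
  exact: cont_1m.
- by rewrite /= subr0.
- by rewrite /= subrr.
Qed.

Lemma conn_map (X Y : topologicalType) (g : X -> Y) (a b : X) :
  continuous g -> conn a b -> conn (g a) (g b).
Proof.
move=> cg [E [cE E0 E1]]; exists (g \o E); split.
- by move=> x; apply: continuous_comp; [exact: cE | exact: cg].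
- by rewrite /= E0.
- by rewrite /= E1.
Qed.

Lemma conn_trans (X : topologicalType) (a b c : X) :
  conn a b -> conn b c -> conn a c.
Proof.
move=> [E [cE E0 E1]] [F [cF F0 F1]].
pose h := 2^-1 : RR.
exists (fun t => if t <= h then E (2 * t) else F (2 * t - 1)); split.
- apply/continuous_subspace_setT.
  have -> : [set: RR] = `]-oo, h] `|` `[h, +oo[.
    apply/seteqP; split => // t _ /=; rewrite !in_itv /= !andbT.
    by case: (leP t h) => H; [left|right] => //; exact: ltW.
  apply: withinU_continuous; [exact: interval_closed | exact: interval_closed | |].
  + apply: (@subspace_eq_continuous _ _ _ (E \o (fun t => 2 * t))).
      by move=> t; rewrite inE /= in_itv /= /from_subspace => ->.
    apply: continuous_subspaceT => x; apply: (@continuous_comp _ _ _ (fun t : RR => 2 * t) E); last exact: cE.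
    exact: cont_2t.
  + apply: (@subspace_eq_continuous _ _ _ (F \o (fun t => 2 * t - 1))).
      move=> t; rewrite inE /= in_itv /= andbT /from_subspace => ht.
      case: ifPn => // hth; have -> : t = h by apply/eqP; rewrite eq_le hth ht.
      by rewrite /h mulfV ?subrr ?F0 -?E1 // pnatr_eq0.
    apply: continuous_subspaceT => x; apply: (@continuous_comp _ _ _ (fun t : RR => 2 * t - 1) F); last exact: cF.
    exact: cont_2tm1.
- by rewrite ifT ?mulr0 // /h invr_ge0 ler0n.
- rewrite ifF; last first.
    by apply/negbTE; rewrite -ltNge /h invf_lt1 // ltr1n.
  by rewrite mulr1 (_ : 2 - 1 = 1) // -addrA subrr addr0 ?F1.
Qed.

Lemma pcE (X : topologicalType) (x0 x : X) : path_component x0 x <-> conn x0 x.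
Proof. exact: pc_conn. Qed.

Lemma cont_op2 (X : topologicalType) (op : X -> X -> X) (T : topologicalType)
  (E F : T -> X) :
  continuous (fun p : X * X => op p.1 p.2) -> continuous E -> continuous F ->
  continuous (fun t => op (E t) (F t)).
Proof.
move=> cop cE cF t.
apply: (@continuous2_cvg _ _ _ _ _ _ E F op); [exact: (cop (E t, F t))|exact: cE|exact: cF].
Qed.

Theorem mainTheorem14 (X : topologicalType) (op : X -> X -> X) :
  topological_quandle op ->
  forall x0 : X,
    topological_subquandle op (path_component x0) /\
    (forall x y, path_component x0 x -> path_component x0 y ->
       path_component x0 (op x y)).
Proof.
move=> [[idem bij sd] cop hom] x0.
set A := path_component x0.
have C : forall x y, A x -> A y -> A (op x y).
  move=> x y /pcE [E [cE E0 E1]] /pcE [F [cF F0 F1]]; apply/pcE.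
  exists (fun t => op (E t) (F t)); split.
  - exact: cont_op2.
  - by rewrite E0 F0 idem.
  - by rewrite E1 F1.
have [gi hgi] := choice hom.
have giC : forall x y, A x -> A y -> A (gi y x).
  move=> x y Ax Ay; have [c1 c2 cb cg] := hgi y.
  have h1 : conn x0 (op x0 y) by apply/pcE; apply: C => //; apply/pcE; exact: conn_refl.
  have h2 : conn (op x0 y) x by apply: conn_trans (conn_sym h1) _; apply/pcE.
  have := conn_map cg h2; rewrite c1 => h3; exact/pcE.
split => //; split => //.
pose opA (a b : set_type A) : set_type A :=
  exist _ (op (val a) (val b)) (mem_set (C _ _ (set_mem (valP a)) (set_mem (valP b)))).
pose giA (b a : set_type A) : set_type A :=
  exist _ (gi (val b) (val a)) (mem_set (giC _ _ (set_mem (valP a)) (set_mem (valP b)))).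
have cval : continuous (@set_val X A) := @initial_continuous _ _ _.
exists opA; split => //.
split.
- split.
  + by move=> a; apply: val_inj; rewrite /= idem.
  + move=> b; exists (giA b).
      by move=> a; apply: val_inj; rewrite /=; have [c1 _ _ _] := hgi (val b); rewrite c1.
    by move=> a; apply: val_inj; rewrite /=; have [_ c2 _ _] := hgi (val b); rewrite c2.
  + by move=> a b c; apply: val_inj; rewrite /= sd.
- apply: (@continuous_comp_initial _ _ _ (@set_val X A)).
  apply: (@cont_op2 X op _ (fun p : set_type A * set_type A => val p.1) (fun p => val p.2)) => //.
  + move=> p; apply: (@continuous_comp _ _ _ fst); [exact: cvg_fst | exact: cval].
  + move=> p; apply: (@continuous_comp _ _ _ snd); [exact: cvg_snd | exact: cval].
- move=> b; exists (giA b); have [c1 c2 cb cg] := hgi (val b); split.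
  + by move=> a; apply: val_inj; rewrite /= c1.
  + by move=> a; apply: val_inj; rewrite /= c2.
  + apply: (@continuous_comp_initial _ _ _ (@set_val X A)).
    move=> a; exact: (@continuous_comp _ _ _ (@set_val X A) (fun x => op x (val b)) a (cval a) (cb _)).
  + apply: (@continuous_comp_initial _ _ _ (@set_val X A)).
    move=> a; exact: (@continuous_comp _ _ _ (@set_val X A) (gi (val b)) a (cval a) (cg _)).
Qed.
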